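(* Let $R$ be an entire commutative semiring. Then the Markov category $\mathsf{Kl}(D_R)$ is positive if and only if $R$ is zerosumfree.
   Context: A commutative semiring $R$ is entire if $0\neq 1$ and $rs=0$ implies $r=0$ or $s=0$; it is zerosumfree if $r+s=0$ implies $r=s=0$. The Markov category $\mathsf{Kl}(D_R)$ has sets as objects; a morphism $f\colon A\to X$ assigns to each $a\in A$ a finitely supported function $f(\cdot\mid a)\colon X\to R$ with $\sum_x f(x\mid a)=1$; composition $(g\circ f)(y\mid a)=\sum_x g(y\mid x)f(x\mid a)$; tensor product is the cartesian product with $(f\otimes g)(x,y\mid a,b)=f(x\mid a)g(y\mid b)$; $\mathrm{copy}_X(x_1,x_2\mid x)=\delta_x(x_1)\delta_x(x_2)$; $\mathrm{del}_X$ is the unique morphism to the singleton. A morphism $f\colon A\to X$ is deterministic if $\mathrm{copy}_X\circ f=(f\otimes f)\circ\mathrm{copy}_A$. A Markov category is positive if for all $f\colon X\to Y$, $g\colon Y\to Z$ with $g\circ f$ deterministic, $(\mathrm{id}_Y\otimes g)\circ\mathrm{copy}_Y\circ f=(f\otimes (g\circ f))\circ\mathrm{copy}_X$. *)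

(* Defs.v *)
From HB Require Import structures.
From mathcomp Require Import all_boot all_order all_algebra.
From mathcomp Require Import boolp classical_sets functions cardinality fsbigop.
Set Implicit Arguments. Unset Strict Implicit. Unset Printing Implicit Defensive.
Import Order.TTheory GRing.Theory.
Local Open Scope classical_set_scope.
Local Open Scope ring_scope.

(* Objects: sets, represented by choiceTypes.
   A morphism f : A -> X is represented by a function f : A -> X -> R,
   with f a x = f(x | a), which is a morphism when every f a is finitely
   supported and sums to 1. *)

Section KlDR.
Variable R : comPzSemiRingType.

Definition entire : Prop :=
  (0 != 1 :> R) /\ (forall r s : R, r * s = 0 -> r = 0 \/ s = 0).

Definition zerosumfree : Prop :=
  forall r s : R, r + s = 0 -> r = 0 /\ s = 0.

Definition fin_supp (X : choiceType) (p : X -> R) : Prop :=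
  finite_set [set x | p x != 0].

Definition fsum (X : choiceType) (p : X -> R) : R := \sum_(x \in [set: X]) p x.

Definition is_kernel (A X : choiceType) (f : A -> X -> R) : Prop :=
  forall a, fin_supp (f a) /\ fsum (f a) = 1.

Definition delta (X : choiceType) (x y : X) : R := if y == x then 1 else 0.

Definition kid (X : choiceType) : X -> X -> R := @delta X.

Definition kcomp (A X Y : choiceType) (g : X -> Y -> R) (f : A -> X -> R)
  : A -> Y -> R := fun a y => fsum (fun x => g x y * f a x).

Definition ktensor (A B X Y : choiceType) (f : A -> X -> R) (g : B -> Y -> R)
  : (A * B)%type -> (X * Y)%type -> R :=
  fun ab xy => f ab.1 xy.1 * g ab.2 xy.2.

Definition kcopy (X : choiceType) : X -> (X * X)%type -> R :=
  fun x xx => delta x xx.1 * delta x xx.2.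

Definition deterministic (A X : choiceType) (f : A -> X -> R) : Prop :=
  kcomp (@kcopy X) f = kcomp (ktensor f f) (@kcopy A).

Definition positive : Prop :=
  forall (X Y Z : choiceType) (f : X -> Y -> R) (g : Y -> Z -> R),
    is_kernel f -> is_kernel g ->
    deterministic (kcomp g f) ->
    kcomp (ktensor (@kid Y) g) (kcomp (@kcopy Y) f)
    = kcomp (ktensor f (kcomp g f)) (@kcopy X).

End KlDR.

(* Main.v *)
Require Import Defs.
From mathcomp Require Import all_boot all_order all_algebra.
From mathcomp Require Import boolp classical_sets functions cardinality fsbigop.
From mathcomp Require Import finmap.
Set Implicit Arguments. Unset Strict Implicit. Unset Printing Implicit Defensive.
Import Order.TTheory GRing.Theory.
Local Open Scope classical_set_scope.
Local Open Scope ring_scope.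

Section Aux.
Variable R : comPzSemiRingType.

Lemma fsum0 (X : choiceType) (p : X -> R) : (forall x, p x = 0) -> fsum p = 0.
Proof. by move=> H; rewrite /fsum; apply: fsbig1 => i _; apply: H. Qed.

Lemma fsum1 (X : choiceType) (p : X -> R) x0 :
  (forall x, x != x0 -> p x = 0) -> fsum p = p x0.
Proof.
move=> H; rewrite /fsum -(fsbig_widen [set x0]) ?fsbig_set1 //.
move=> x [_ /= Hx]; apply: H; apply/eqP => E; exact: Hx E.
Qed.

Lemma zsf_seq (X : eqType) (p : X -> R) : zerosumfree R ->
  forall s : seq X, \sum_(i <- s) p i = 0 -> forall i, i \in s -> p i = 0.
Proof.
move=> Z; elim=> [|a s IH] //= Hs i.
move: Hs; rewrite big_cons => /Z [Ha Hs]; rewrite inE => /orP [/eqP ->//|].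
exact: IH.
Qed.

Lemma fsum_zsf (X : choiceType) (p : X -> R) : zerosumfree R ->
  fin_supp p -> fsum p = 0 -> forall x, p x = 0.
Proof.
move=> Z Hf; rewrite /fsum; case: finite_supportP.
  rewrite setTI => Hinf; exfalso; apply: Hinf; apply: sub_finite_set Hf => x /= /eqP //.
move=> S _ HS HSE Hs x.
case: (boolP (x \in S)) => Hx; last exact: HS.
exact: (zsf_seq Z Hs).
Qed.

Lemma comp_copy_l (A X : choiceType) (f : A -> X -> R) a x1 x2 :
  kcomp (@kcopy R X) f a (x1, x2) = if x2 == x1 then f a x1 else 0.
Proof.
rewrite /kcomp (fsum1 (x0:=x1)) /kcopy /delta /= ?eqxx ?mul1r.
  by case: ifP => _; rewrite ?mul1r ?mul0r.
by move=> x /negbTE; rewrite eq_sym => ->; rewrite !mul0r.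
Qed.

Lemma comp_copy_r (A Y : choiceType) (h : (A * A)%type -> Y -> R) a y :
  kcomp h (@kcopy R A) a y = h (a, a) y.
Proof.
rewrite /kcomp (fsum1 (x0:=(a, a))) /kcopy /delta /= ?eqxx ?mulr1 //.
case=> u v /= H; case: eqP => Hu; last by rewrite !mul0r mulr0.
case: eqP => Hv; last by rewrite !mulr0.
by move: H; rewrite Hu Hv eqxx.
Qed.


Lemma pos_lhs (X Y Z : choiceType) (f : X -> Y -> R) (g : Y -> Z -> R) x y z :
  kcomp (ktensor (@kid R Y) g) (kcomp (@kcopy R Y) f) x (y, z) = f x y * g y z.
Proof.
move: (comp_copy_l f x) => CC.
move: (kcomp (@kcopy R Y) f) CC => K CC.
rewrite /kcomp (fsum1 (x0:=(y, y))).
  rewrite CC eqxx /ktensor /kid /delta /=.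
  by case: eqP => // _; rewrite mul1r mulrC.
case=> u v /= H; rewrite CC /ktensor /kid /delta /=.
case: eqP => Hu; last by rewrite !mul0r.
case: eqP => Hv; last by rewrite !mulr0.
by move: H; rewrite Hv -Hu => /eqP.
Qed.

Lemma pos_rhs (X Y Z : choiceType) (f : X -> Y -> R) (h : X -> Z -> R) x y z :
  kcomp (ktensor f h) (@kcopy R X) x (y, z) = f x y * h x z.
Proof. by rewrite comp_copy_r. Qed.

Lemma det_pt (A X : choiceType) (h : A -> X -> R) : deterministic h ->
  forall a z1 z2, (if z2 == z1 then h a z1 else 0) = h a z1 * h a z2.
Proof.
move=> Hd a z1 z2.
have := congr1 (fun F => F a (z1, z2)) Hd => /=.
by rewrite comp_copy_l comp_copy_r.
Qed.

End Aux.

Theorem proposition2p12 (R : comPzSemiRingType) :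
  entire R -> (positive R <-> zerosumfree R).
Proof.
move=> [R01 Rent]; split.
- move=> Hpos r s Hrs.
  case: (eqVneq r 0) => Hr.
    by split=> //; rewrite Hr add0r in Hrs.
  exfalso.
  pose f : unit -> option bool -> R := fun _ y =>
    match y with None => 1 | Some true => r | Some false => s end.
  pose g : option bool -> bool -> R := fun y z => delta R (y == None) z.
  have fsumOB (p : option bool -> R) :
      fsum p = p None + (p (Some true) + p (Some false)).
    rewrite /fsum (fsbig_fwiden [:: None; Some true; Some false]).
    - rewrite !big_cons big_nil.
      by change (p None + (p (Some true) + (p (Some false) + 0)) = p None + (p (Some true) + p (Some false))); rewrite addr0.
    - by move=> [[]|] _ /=; rewrite !inE.
    - by [].
    - by move=> x [] _ [].
  have fsumB (p : bool -> R) : fsum p = p true + (p false).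
    rewrite /fsum (fsbig_fwiden [:: true; false]).
    - rewrite !big_cons big_nil.
      by change (p true + (p false + 0) = p true + p false); rewrite addr0.
    - by move=> [] _ /=; rewrite !inE.
    - by [].
    - by move=> x [] _ [].
  have Hkf : is_kernel f.
    move=> a; split; first exact: finite_finset.
    by rewrite fsumOB /f Hrs addr0.
  have Hkg : is_kernel g.
    move=> a; split; first exact: finite_finset.
    rewrite fsumB /g /delta; case: (a == None) => /=; by rewrite ?addr0 ?add0r.
  have Hgf z : kcomp g f tt z = delta R true z.
    rewrite /kcomp fsumOB /g /f /delta; case: z => /=.
      by rewrite !mul0r !addr0 mul1r.
    by rewrite !mul1r mul0r add0r.
  have Hdet : deterministic (kcomp g f).
    rewrite /deterministic; apply/funext => a; apply/funext => -[z1 z2].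
    rewrite comp_copy_l comp_copy_r /ktensor /=; case: a.
    rewrite !Hgf /delta; case: z1; case: z2 => /=;
      by rewrite ?mulr1 ?mul0r ?mulr0.
  have := Hpos _ _ _ f g Hkf Hkg Hdet.
  move=> /(congr1 (fun F => F tt (Some true, false))).
  rewrite pos_lhs pos_rhs Hgf /f /g /delta /= mulr1 mulr0 => Hr0.
  by rewrite Hr0 eqxx in Hr.
- move=> Zs X Y Z f g Hf Hg Hd.
  have Hd' := det_pt Hd.
  apply/funext => x; apply/funext => -[y z]; rewrite pos_lhs pos_rhs.
  have fsupp z0 : fin_supp (fun y' => g y' z0 * f x y').
    apply: sub_finite_set (proj1 (Hf x)) => y' /=; apply: contra.
    by move=> /eqP ->; rewrite mulr0.
  case: (eqVneq (kcomp g f x z) 0) => Hz.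
    have := fsum_zsf Zs (fsupp z) Hz y.
    by rewrite Hz => /Rent [->|->]; rewrite ?mulr0 ?mul0r.
  have Hoth z' : z' != z -> kcomp g f x z' = 0.
    move=> Hne; have := Hd' x z z'; rewrite (negbTE Hne) => /esym /Rent [H|//].
    by rewrite H eqxx in Hz.
  have Hg1 y' : f x y' != 0 -> g y' z = 1.
    move=> Hy'.
    have Hg0 z' : z' != z -> g y' z' = 0.
      move=> Hne; have := fsum_zsf Zs (fsupp z') (Hoth z' Hne) y'.
      by move=> /Rent [//|H]; rewrite H eqxx in Hy'.
    by rewrite -(fsum1 Hg0); case: (Hg y').
  have Hgf : kcomp g f x z = 1.
    rewrite /kcomp; transitivity (fsum (f x)); last by case: (Hf x).
    congr fsum; apply/funext => y'; case: (eqVneq (f x y') 0) => H.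
      by rewrite H mulr0.
    by rewrite Hg1 // mul1r.
  rewrite Hgf mulr1; case: (eqVneq (f x y) 0) => H.
    by rewrite H !mul0r.
  by rewrite Hg1 // mulr1.
Qed.
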